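(* Let $n>2$, let $f:[0,\infty)\to Cl_{n-1}$ be an $L^1$ function and let $\psi\in V(n-1)$. Then $$F(x,y)=\int_0^{\frac{\|x-y\|}{\|x-\hat y\|}}f(r)\,dr$$ is a well-defined function on $\mathbb{R}^{n,+}\times\mathbb{R}^{n,+}$, and $F(\psi(x),\psi(y))=F(x,y)$ for all $x,y\in\mathbb{R}^{n,+}$.
   Context: $Cl_n$ is the real Clifford algebra generated by an orthonormal basis $e_1,\dots,e_n$ of $\mathbb{R}^n$ with $e_ie_j+e_je_i=-2\delta_{ij}$, and $Cl_{n-1}$ the subalgebra generated by $e_1,\dots,e_{n-1}$; vectors $x=\sum x_je_j$ of $\mathbb{R}^n$ are viewed in $Cl_n$, $\|\cdot\|$ is the Euclidean norm, and $\mathbb{R}^{n,+}=\{x:x_n>0\}$. For $y=\sum y_je_j$, $\hat y=y_1e_1+\dots+y_{n-1}e_{n-1}-y_ne_n$. The reversion $\sim$ is the anti-automorphism of $Cl_n$ with $\widetilde{e_{j_1}\cdots e_{j_r}}=e_{j_r}\cdots e_{j_1}$. $V(n-1)$ denotes the (Vahlen) group of Möbius transformations of $\mathbb{R}^n\cup\{\infty\}$ of the form $\psi(x)=(ax+b)(cx+d)^{-1}$ with $a,b,c,d\in Cl_{n-1}$ each a product of vectors of $\mathbb{R}^{n-1}$ (or zero), $\tilde a c,\tilde c d,\tilde d b,\tilde b a\in\mathbb{R}^{n-1}$ and $\tilde a d-\tilde b c=\pm1$ (the extensions to $\mathbb{R}^n\cup\{\infty\}$ of Möbius transformations of $\mathbb{R}^{n-1}\cup\{\infty\}$);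 each such $\psi$ maps $\mathbb{R}^{n,+}$ onto itself. *)

(* Defs.v *)
From HB Require Import structures.
From mathcomp Require Import all_boot all_order all_algebra.
From mathcomp Require Import all_classical all_reals all_analysis.
Set Implicit Arguments. Unset Strict Implicit. Unset Printing Implicit Defensive.
Import Order.TTheory GRing.Theory Num.Theory.
Local Open Scope ring_scope.

Section Clifford.
Variables (R : realType) (n : nat).

(* The real Clifford algebra Cl_n: elements are coefficient functions on the
   basis blades e_A = e_{i1} ... e_{ik} (i1 < ... < ik), A a subset of 'I_n.
   Index i : 'I_n stands for e_{i+1}; so e_n is the index with value n.-1. *)
Definition Cl := {set 'I_n} -> R.

(* e_A e_B = cl_sign A B e_{A Δ B}, with e_i e_j + e_j e_i = -2 delta_ij *)
Definition cl_sign (A B : {set 'I_n}) : R :=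
  (-1) ^+ (#|finset.finset (fun p : 'I_n * 'I_n => (p.1 \in A) && (p.2 \in B) && (p.2 < p.1)%N)|
            + #|A :&: B|)%N.

Definition symd (A B : {set 'I_n}) : {set 'I_n} := (A :\: B) :|: (B :\: A).

Definition cladd (u v : Cl) : Cl := fun A => u A + v A.
Definition clopp (u : Cl) : Cl := fun A => - u A.
Definition clsub (u v : Cl) : Cl := fun A => u A - v A.
Definition clzero : Cl := fun _ => 0.
Definition clone : Cl := fun A => (A == finset.set0)%:R.
Definition clmul (u v : Cl) : Cl :=
  fun C => \sum_(A : {set 'I_n}) cl_sign A (symd A C) * u A * v (symd A C).

(* multiplicative inverse in Cl_n (when it exists; 0 otherwise) *)
Definition clinv (u : Cl) : Cl :=
  match pselect (exists v : Cl, clmul u v = clone /\ clmul v u = clone) with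
  | left h => projT1 (cid h)
  | right _ => clzero
  end.

(* reversion: e_{j1}...e_{jr} |-> e_{jr}...e_{j1} *)
Definition clrev (u : Cl) : Cl := fun A => (-1) ^+ 'C(#|A|, 2) * u A.

Definition clvec (x : 'I_n -> R) : Cl :=
  fun A => \sum_(i : 'I_n) (A == finset.set1 i)%:R * x i.

(* Euclidean norm (of the coefficient vector; on vectors it is ||x||) *)
Definition clnorm (u : Cl) : R := Num.sqrt (\sum_(A : {set 'I_n}) u A ^+ 2).

(* hat: e_n |-> -e_n (for a vector y this is y_1e_1+...+y_{n-1}e_{n-1}-y_ne_n) *)
Definition clhat (u : Cl) : Cl :=
  fun A => (if [exists i in A, nat_of_ord i == n.-1] then -1 else 1) * u A.

Definition in_uhs (x : 'I_n -> R) : Prop :=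
  forall i : 'I_n, nat_of_ord i = n.-1 -> 0 < x i.

Definition sub_vector (x : 'I_n -> R) : Prop :=
  forall i : 'I_n, nat_of_ord i = n.-1 -> x i = 0.

Definition in_Cl_sub (u : Cl) : Prop :=
  forall (A : {set 'I_n}) (i : 'I_n), i \in A -> nat_of_ord i = n.-1 -> u A = 0.

Definition is_sub_vec (u : Cl) : Prop :=
  exists x : 'I_n -> R, sub_vector x /\ u = clvec x.

Definition is_vprod (u : Cl) : Prop :=
  exists s : seq ('I_n -> R), (forall i : nat, (i < size s)%N -> sub_vector (nth (fun _ => 0) s i)) /\
    u = foldr (fun x acc => clmul (clvec x) acc) clone s.

Definition vahlen (a b c d : Cl) : Prop :=
  [/\ (is_vprod a \/ a = clzero), (is_vprod b \/ b = clzero),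
      (is_vprod c \/ c = clzero), (is_vprod d \/ d = clzero) &
  [/\ is_sub_vec (clmul (clrev a) c), is_sub_vec (clmul (clrev c) d),
      is_sub_vec (clmul (clrev d) b), is_sub_vec (clmul (clrev b) a) &
      (clsub (clmul (clrev a) d) (clmul (clrev b) c) = clone \/
       clsub (clmul (clrev a) d) (clmul (clrev b) c) = clopp clone)]].

Definition mobius (a b c d : Cl) (x : 'I_n -> R) : Cl :=
  clmul (cladd (clmul a (clvec x)) b) (clinv (cladd (clmul c (clvec x)) d)).

Definition hratio (u v : Cl) : R := clnorm (clsub u v) / clnorm (clsub u (clhat v)).

Definition Fint (f : R -> Cl) (u v : Cl) : Cl :=
  fun A => Rintegral (@lebesgue_measure R) `[0, hratio u v]%classic (fun r => f r A).

End Clifford.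

(* Main.v *)
Require Import Defs.
From HB Require Import structures.
From mathcomp Require Import all_boot all_order all_algebra.
From mathcomp Require Import all_classical all_reals all_analysis.
From mathcomp Require Import ring lra zify.
Import Order.TTheory GRing.Theory Num.Theory.
Local Open Scope ring_scope.
Set Implicit Arguments. Unset Strict Implicit. Unset Printing Implicit Defensive.

Section Sign.
Variables (R : realType) (n : nat).
Implicit Types A B C : {set 'I_n}.

Definition sgn A B : R := \prod_(i : 'I_n) \prod_(j : 'I_n)
  (if (i \in A) && (j \in B) && (j <= i)%N then -1 else 1).

Lemma in_symd (x : 'I_n) A B : (x \in symd A B) = (x \in A) (+) (x \in B).
Proof. by rewrite /symd !inE; case: (x \in A); case: (x \in B). Qed.

Lemma symdC A B : symd A B = symd B A.
Proof. by apply/setP => x; rewrite !in_symd addbC. Qed.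
Lemma symdA A B C : symd A (symd B C) = symd (symd A B) C.
Proof. by apply/setP => x; rewrite !in_symd addbA. Qed.
Lemma symdK A B : symd A (symd A B) = B.
Proof. by apply/setP => x; rewrite !in_symd addbA addbb. Qed.
Lemma symdv A : symd A A = finset.set0.
Proof. by apply/setP => x; rewrite !in_symd addbb inE. Qed.
Lemma symd0 A : symd A finset.set0 = A.
Proof. by apply/setP => x; rewrite !in_symd inE addbF. Qed.
Lemma symd_inj A : injective (symd A).
Proof. by move=> B B' h; rewrite -(symdK A B) h symdK. Qed.

Lemma sgnDl A A' B : sgn (symd A A') B = sgn A B * sgn A' B.
Proof.
rewrite /sgn -big_split; apply: eq_bigr => i _; rewrite -big_split.
apply: eq_bigr => j _; rewrite in_symd.
by case: (i \in A); case: (i \in A'); case: (j \in B); case: (j <= i)%N;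
  rewrite /= ?mulr1 ?mul1r ?mulrNN ?mulr1.
Qed.

Lemma sgnDr A B B' : sgn A (symd B B') = sgn A B * sgn A B'.
Proof.
rewrite /sgn -big_split; apply: eq_bigr => i _; rewrite -big_split.
apply: eq_bigr => j _; rewrite in_symd.
by case: (i \in A); case: (j \in B); case: (j \in B'); case: (j <= i)%N;
  rewrite /= ?mulr1 ?mul1r ?mulrNN ?mulr1.
Qed.

Lemma sgn_sq A B : sgn A B * sgn A B = 1.
Proof.
rewrite /sgn -big_split big1 // => i _; rewrite -big_split big1 // => j _.
by rewrite /=; case: ifP => _; rewrite ?mulrNN mulr1.
Qed.

Lemma sgn0l B : sgn finset.set0 B = 1.
Proof. by rewrite /sgn big1 // => i _; rewrite big1 // => j _; rewrite inE. Qed.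
Lemma sgn0r A : sgn A finset.set0 = 1.
Proof. by rewrite /sgn big1 // => i _; rewrite big1 // => j _; rewrite inE andbF. Qed.

Lemma sgn_assoc A B C : sgn B (symd B C) * sgn A (symd A B) =
  sgn A (symd A C) * sgn (symd A B) (symd B C).
Proof.
rewrite !sgnDl !sgnDr.
transitivity (sgn B B * sgn B C * (sgn A A * sgn A B) * (sgn A C * sgn A C)).
  by rewrite sgn_sq mulr1.
ring.
Qed.

Lemma cl_signE A B : cl_sign R A B = sgn A B.
Proof.
rewrite /cl_sign exprD.
have -> : #|finset (fun p : 'I_n * 'I_n => (p.1 \in A) && (p.2 \in B) && (p.2 < p.1)%N)|
   = (\sum_i \sum_j ((i \in A) && (j \in B) && (j < i)%N : nat))%N.
  rewrite cardsE -sum1_card big_mkcond /= (pair_bigA _ (fun i j =>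
     ((i \in A) && (j \in B) && (j < i)%N : nat))) /=.
  by apply: eq_bigr => p _; rewrite unfold_in; case: ifP.
have -> : #|A :&: B| = (\sum_i \sum_j ((i \in A) && (j \in B) && (j == i) : nat))%N.
  rewrite -sum1_card big_mkcond /=; apply: eq_bigr => i _.
  rewrite (bigD1 i) //= eqxx big1 ?addn0 => [|j /negbTE ->]; last by rewrite andbF.
  by rewrite inE andbT; case: ifP.
rewrite !expr_sum -big_split /=; apply: eq_bigr => i _.
rewrite !expr_sum -big_split /=; apply: eq_bigr => j _.
case: (i \in A); case: (j \in B); rewrite /= ?mulr1 //.
case: ltngtP => [h|h|/val_inj ->]; rewrite /= ?expr1 ?expr0 ?mulr1 ?mul1r.
- by rewrite -val_eqE /= ltn_eqF // mulr1.
- by rewrite -val_eqE /= gtn_eqF.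
- by rewrite eqxx.
Qed.

End Sign.

Definition clT (R : realType) n := Cl R n.
HB.instance Definition _ (R : realType) n := GRing.Lmodule.on (clT R n).

Section Alg.
Variables (R : realType) (n : nat).
Implicit Types A B C : {set 'I_n}.
Implicit Types u v w : Cl R n.
Local Notation S0 := (finset.set0 : {set 'I_n}).

Lemma addE u v A : (u + v) A = u A + v A. Proof. by []. Qed.
Lemma oppE u A : (- u) A = - u A. Proof. by []. Qed.
Lemma subE u v A : (u - v) A = u A - v A. Proof. by []. Qed.
Lemma zeroE A : (0 : Cl R n) A = 0. Proof. by []. Qed.
Lemma scaleE (k : R) u A : (k *: u) A = k * u A. Proof. by []. Qed.

Lemma clmulE u v C : clmul u v C = \sum_A sgn R A (symd A C) * u A * v (symd A C).
Proof. by apply: eq_bigr => A _; rewrite cl_signE. Qed.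

Lemma symd_can A B C : symd (symd A B) (symd A C) = symd B C.
Proof. by apply/setP => x; rewrite !in_symd; case: (x \in A); case: (x \in B); case: (x \in C). Qed.
Lemma sym0d A : symd S0 A = A.
Proof. by rewrite symdC symd0. Qed.
Lemma symd_eq0 A B : (symd A B == S0) = (A == B).
Proof.
apply/eqP/eqP => [h|->]; last exact: symdv.
by rewrite -(symdK A B) h symd0.
Qed.

Local Notation clT := (clT R n).

Lemma clmulA : associative (@clmul R n : clT -> clT -> clT).
Proof.
move=> u v w; symmetry.
apply/funext => C; rewrite !clmulE.
under eq_bigr => B _ do rewrite clmulE mulr_sumr mulr_suml.
rewrite exchange_big /=; apply: eq_bigr => A _.
rewrite clmulE mulr_sumr (reindex_inj (@symd_inj n A)) /=.
apply: eq_bigr => B _; rewrite symdK.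
have -> : symd (symd A B) C = symd B (symd A C) by rewrite symdA (symdC B A).
rewrite !sgnDl !sgnDr.
transitivity (sgn R A A * sgn R A C * u A * (sgn R B B * sgn R B A * sgn R B C * v B * w (symd B (symd A C))) * (sgn R A B * sgn R A B)).
  ring.
rewrite (sgn_sq R A B) mulr1; ring.
Qed.

Lemma clmul1l : left_id (@clone R n : clT) (@clmul R n : clT -> clT -> clT).
Proof.
move=> u; apply/funext => C; rewrite clmulE (bigD1 S0) //= big1 ?addr0.
  by rewrite sgn0l /clone eqxx sym0d !mul1r.
by move=> A /negbTE hA; rewrite /clone hA mulr0 mul0r.
Qed.

Lemma clmul1r : right_id (@clone R n : clT) (@clmul R n : clT -> clT -> clT).
Proof.
move=> u; apply/funext => C; rewrite clmulE (bigD1 C) //= big1 ?addr0.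
  by rewrite symdv sgn0r /clone eqxx mul1r mulr1.
by move=> A /negbTE hA; rewrite /clone symd_eq0 hA mulr0.
Qed.

Lemma clmulDl : left_distributive (@clmul R n : clT -> clT -> clT) +%R.
Proof.
move=> u v w; apply/funext => C; rewrite addE !clmulE -big_split /=.
by apply: eq_bigr => A _; rewrite addE mulrDr mulrDl.
Qed.

Lemma clmulDr : right_distributive (@clmul R n : clT -> clT -> clT) +%R.
Proof.
move=> u v w; apply/funext => C; rewrite addE !clmulE -big_split /=.
by apply: eq_bigr => A _; rewrite addE mulrDr.
Qed.

Lemma clone_neq0 : (@clone R n : clT) != 0.
Proof.
apply/eqP => /(congr1 (fun f => f S0)); rewrite /clone eqxx /=.
by move/eqP; rewrite oner_eq0.
Qed.

Lemma clscaleAl (a : R) (u v : clT) : a *: clmul u v = clmul (a *: u) v.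
Proof.
apply/funext => C; rewrite scaleE !clmulE mulr_sumr; apply: eq_bigr => A _; rewrite !scaleE.
ring.
Qed.

Lemma clscaleAr (a : R) (u v : clT) : a *: clmul u v = clmul u (a *: v).
Proof.
apply/funext => C; rewrite scaleE !clmulE mulr_sumr; apply: eq_bigr => A _; rewrite !scaleE.
ring.
Qed.

End Alg.

HB.instance Definition _ (R : realType) n := GRing.Zmodule_isNzRing.Build (clT R n)
  (@clmulA R n) (@clmul1l R n) (@clmul1r R n) (@clmulDl R n) (@clmulDr R n) (@clone_neq0 R n).
HB.instance Definition _ (R : realType) n := GRing.Lmodule_isLalgebra.Build R (clT R n) (@clscaleAl R n).
HB.instance Definition _ (R : realType) n := GRing.Lalgebra_isAlgebra.Build R (clT R n) (@clscaleAr R n).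

Lemma clmulM (R : realType) n (u v : Cl R n) : clmul u v = (u : clT R n) * (v : clT R n).
Proof. by []. Qed.
Lemma cloneE (R : realType) n : @clone R n = (1 : clT R n).
Proof. by []. Qed.


Section Diag.
Variables (R : realType) (n : nat).
Implicit Types A B C : {set 'I_n}.
Local Notation clT := (clT R n).
Implicit Types u v w : clT.
Local Notation S0 := (finset.set0 : {set 'I_n}).

Definition diagmap (h : {set 'I_n} -> R) (u : clT) : clT := fun A => h A * u A.

Lemma clmulE' (u v : clT) C : (u * v) C = \sum_A sgn R A (symd A C) * u A * v (symd A C).
Proof. exact: clmulE. Qed.

Lemma diag_anti h : (forall A B, h (symd A B) * sgn R A B = h A * h B * sgn R B A) ->
  forall u v, diagmap h (u * v) = diagmap h v * diagmap h u.
Proof.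
move=> hh u v; apply/funext => C; rewrite /diagmap !clmulE' mulr_sumr.
rewrite (reindex_inj (@symd_inj n C)) /=; apply: eq_bigr => A _.
have e1 : symd (symd C A) C = A by rewrite symdC symdA symdv sym0d.
have e2 : symd (symd A C) A = C by rewrite symdC symdK.
rewrite e1 (symdC C A).
have := hh (symd A C) A; rewrite e2 => e.
transitivity ((h C * sgn R (symd A C) A) * u (symd A C) * v A); first ring.
rewrite e; ring.
Qed.

Lemma diag_auto h : (forall A B, h (symd A B) = h A * h B) ->
  forall u v, diagmap h (u * v) = diagmap h u * diagmap h v.
Proof.
move=> hh u v; apply/funext => C; rewrite /diagmap !clmulE' mulr_sumr.
apply: eq_bigr => A _.
have := hh A (symd A C); rewrite symdK => e; rewrite e; ring.
Qed.

Lemma diagD h u v : diagmap h (u + v) = diagmap h u + diagmap h v.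
Proof. by apply/funext => C; rewrite /diagmap !addE mulrDr. Qed.
Lemma diagN h u : diagmap h (- u) = - diagmap h u.
Proof. by apply/funext => C; rewrite /diagmap !oppE mulrN. Qed.
Lemma diagB h u v : diagmap h (u - v) = diagmap h u - diagmap h v.
Proof. by rewrite diagD diagN. Qed.
Lemma diagZ h (k : R) u : diagmap h (k *: u) = k *: diagmap h u.
Proof. by apply/funext => C; rewrite /diagmap !scaleE mulrCA. Qed.
Lemma diag1 h : h S0 = 1 -> diagmap h 1 = 1.
Proof.
move=> h0; apply/funext => C; rewrite /diagmap -!cloneE /clone.
by case: eqP => [->|_]; rewrite ?h0 ?mul1r ?mulr0.
Qed.
Lemma diag_invol h : (forall A, h A * h A = 1) -> forall u, diagmap h (diagmap h u) = u.
Proof. by move=> hh u; apply/funext => C; rewrite /diagmap mulrA hh mul1r. Qed.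
Lemma diag_scal h (k : R) : h S0 = 1 -> diagmap h (k%:A) = k%:A.
Proof. by move=> h0; rewrite diagZ diag1. Qed.

Lemma sign_sq k : (-1) ^+ k * (-1) ^+ k = 1 :> R.
Proof. by rewrite -expr2 -exprM mulnC exprM sqrrN !expr1n. Qed.

Definition par A : R := (-1) ^+ #|A|.

Lemma parE A : par A = \prod_(i : 'I_n) (if i \in A then -1 else 1).
Proof.
rewrite /par -sum1_card expr_sum big_mkcond /=; apply: eq_bigr => i _.
by case: ifP; rewrite ?expr1 ?expr0.
Qed.

Lemma parD A B : par (symd A B) = par A * par B.
Proof.
rewrite !parE -big_split; apply: eq_bigr => i _; rewrite in_symd.
by case: (i \in A); case: (i \in B); rewrite /= ?mulr1 ?mul1r ?mulrNN ?mulr1.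
Qed.

Lemma par_sq A : par A * par A = 1.
Proof. exact: sign_sq. Qed.

Definition sig2 A : nat := (\sum_(i : 'I_n) \sum_(j : 'I_n) ((i \in A) && (j \in A) && (j <= i)%N : nat))%N.

Lemma sgnAA A : sgn R A A = (-1) ^+ sig2 A.
Proof.
rewrite /sgn /sig2 expr_sum; apply: eq_bigr => i _; rewrite expr_sum.
by apply: eq_bigr => j _; case: ifP; rewrite ?expr1 ?expr0.
Qed.

Lemma sig2E A : (sig2 A * 2 = #|A| * #|A| + #|A|)%N.
Proof.
have e1 : (sig2 A = \sum_(i : 'I_n) \sum_(j : 'I_n) ((i \in A) && (j \in A) && (i <= j)%N : nat))%N.
  rewrite /sig2 exchange_big /=; apply: eq_bigr => i _; apply: eq_bigr => j _.
  by rewrite [(j \in A) && _]andbC.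
rewrite muln2 -addnn {1}e1 /sig2 -big_split /=.
have -> : (#|A| * #|A| + #|A| = \sum_(i : 'I_n) \sum_(j : 'I_n)
     ((i \in A) && (j \in A) : nat) + \sum_(i : 'I_n) \sum_(j : 'I_n) ((i \in A) && (j \in A) && (i == j) : nat))%N.
  congr (_ + _)%N.
    rewrite -sum1_card big_distrl /= big_mkcond /=; apply: eq_bigr => i _.
    rewrite big_mkcond /= mul1n; case: (i \in A) => //=.
    by rewrite big1.
  rewrite -sum1_card big_mkcond /=; apply: eq_bigr => i _.
  rewrite (bigD1 i) //= eqxx andbT big1 ?addn0; first by case: (i \in A).
  by move=> j /negbTE; rewrite eq_sym => ->; rewrite andbF.
rewrite -big_split /=; apply: eq_bigr => i _; rewrite -big_split -big_split /=.
apply: eq_bigr => j _.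
case: (i \in A); case: (j \in A) => //=.
case: ltngtP => [h|h|/val_inj ->]; rewrite ?eqxx //.
- by rewrite -val_eqE /= ltn_eqF.
- by rewrite -val_eqE /= gtn_eqF.
Qed.

Lemma bin2S k : ('C(k.+1, 2) * 2 = k * k + k)%N.
Proof.
elim: k => [//|k IH]; rewrite binS bin1 mulnDl IH; lia.
Qed.

Lemma revsgn A : (-1) ^+ 'C(#|A|, 2) = sgn R A A * par A :> R.
Proof.
have e : sig2 A = 'C(#|A|.+1, 2).
  have := sig2E A; have := bin2S #|A|; lia.
rewrite sgnAA e binS bin1 exprD /par -mulrA sign_sq mulr1 //.
Qed.

Definition rsg A : R := (-1) ^+ 'C(#|A|, 2).

Lemma rsg_prop A B : rsg (symd A B) * sgn R A B = rsg A * rsg B * sgn R B A.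
Proof.
rewrite /rsg !revsgn parD sgnDl !sgnDr.
transitivity ((sgn R A A * par A) * (sgn R B B * par B) * sgn R B A * (sgn R A B * sgn R A B)).
  ring.
by rewrite sgn_sq mulr1.
Qed.

Lemma qsg_prop A B : sgn R (symd A B) (symd A B) * sgn R A B = sgn R A A * sgn R B B * sgn R B A.
Proof.
rewrite sgnDl !sgnDr.
transitivity (sgn R A A * sgn R B B * sgn R B A * (sgn R A B * sgn R A B)).
  ring.
by rewrite sgn_sq mulr1.
Qed.

Lemma rsg_sq A : rsg A * rsg A = 1.
Proof. exact: sign_sq. Qed.
Lemma rsg0 : rsg S0 = 1.
Proof. by rewrite /rsg cards0. Qed.

Definition cconj (u : clT) : clT := diagmap (fun A => sgn R A A) u.
Definition crev (u : clT) : clT := diagmap rsg u.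

Lemma crevE (u : Cl R n) : clrev u = crev u.
Proof. by []. Qed.

Lemma crevM u v : crev (u * v) = crev v * crev u.
Proof. by apply: diag_anti => A B; apply: rsg_prop. Qed.
Lemma cconjM u v : cconj (u * v) = cconj v * cconj u.
Proof. by apply: diag_anti => A B; apply: qsg_prop. Qed.
Lemma crevK u : crev (crev u) = u.
Proof. by apply: diag_invol => A; apply: rsg_sq. Qed.
Lemma cconjK u : cconj (cconj u) = u.
Proof. by apply: diag_invol => A; rewrite sgn_sq. Qed.
Lemma crevD u v : crev (u + v) = crev u + crev v. Proof. exact: diagD. Qed.
Lemma crevB u v : crev (u - v) = crev u - crev v. Proof. exact: diagB. Qed.
Lemma crevN u : crev (- u) = - crev u. Proof. exact: diagN. Qed.
Lemma crevZ k u : crev (k *: u) = k *: crev u. Proof. exact: diagZ. Qed.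
Lemma crev_scal k : crev k%:A = k%:A. Proof. by apply: diag_scal; apply: rsg0. Qed.
Lemma crev1 : crev 1 = 1. Proof. by apply: diag1; apply: rsg0. Qed.
Lemma cconjD u v : cconj (u + v) = cconj u + cconj v. Proof. exact: diagD. Qed.
Lemma cconjB u v : cconj (u - v) = cconj u - cconj v. Proof. exact: diagB. Qed.
Lemma cconjN u : cconj (- u) = - cconj u. Proof. exact: diagN. Qed.
Lemma cconjZ k u : cconj (k *: u) = k *: cconj u. Proof. exact: diagZ. Qed.
Lemma cconj_scal k : cconj k%:A = k%:A. Proof. by apply: diag_scal; apply: sgn0l. Qed.
Lemma cconj1 : cconj 1 = 1. Proof. by apply: diag1; apply: sgn0l. Qed.

End Diag.

Section Vec.
Variables (R : realType) (n : nat).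
Implicit Types A B C : {set 'I_n}.
Local Notation clT := (clT R n).
Implicit Types u v w g : clT.
Local Notation S0 := (finset.set0 : {set 'I_n}).

Lemma clinvE u v : u * v = 1 -> v * u = 1 -> clinv u = v.
Proof.
move=> h1 h2; rewrite /clinv; case: pselect => [h|[]]; last by exists v.
case: (cid h) => v' [e1 e2] /=.
rewrite clmulM cloneE in e2.
have -> : v' = (v' : clT) * (u * v) by rewrite h1 mulr1.
by rewrite mulrA e2 mul1r.
Qed.

Definition nrm2 u : R := \sum_A u A ^+ 2.

Lemma clnormE u : clnorm u = Num.sqrt (nrm2 u).
Proof. by []. Qed.

Lemma scal0 u v : (u * v) S0 = (v * u) S0.
Proof.
rewrite !clmulE'; apply: eq_bigr => A _; rewrite symd0; ring.
Qed.

Lemma scal_conj u : (u * cconj u) S0 = nrm2 u.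
Proof.
rewrite clmulE' /nrm2; apply: eq_bigr => A _; rewrite symd0 /cconj /diagmap.
transitivity (sgn R A A * sgn R A A * u A ^+ 2); first ring.
by rewrite sgn_sq mul1r.
Qed.

Lemma scal_alg k u : (k%:A * u) S0 = k * u S0.
Proof. by rewrite mulr_algl. Qed.

Lemma nrm_mull g u (mu : R) : cconj g * g = mu%:A -> nrm2 (g * u) = mu * nrm2 u.
Proof.
move=> h; rewrite -!scal_conj cconjM scal0 -!mulrA.
by rewrite (mulrA (cconj g)) h mulr_algl -scalerAr scaleE scal0.
Qed.

Lemma nrm_mulr g u (mu : R) : g * cconj g = mu%:A -> nrm2 (u * g) = mu * nrm2 u.
Proof.
move=> h; rewrite -!scal_conj cconjM -mulrA (mulrA g) h mulr_algl -scalerAr.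
by [].
Qed.

Lemma nrm2_ge0 u : 0 <= nrm2 u.
Proof. by apply: sumr_ge0 => A _; rewrite sqr_ge0. Qed.

Lemma nrm2_eq0 u : (nrm2 u == 0) = (u == 0).
Proof.
apply/idP/eqP => [|->]; last by rewrite /nrm2 big1 // => A _; rewrite zeroE expr0n.
rewrite /nrm2 psumr_eq0 => [/allP h|A _]; last by rewrite sqr_ge0.
apply/funext => A; rewrite zeroE; apply/eqP; rewrite -sqrf_eq0.
by apply: (h A); rewrite mem_index_enum.
Qed.

Lemma nrm2_alg k : nrm2 (k%:A : clT) = k ^+ 2.
Proof.
rewrite /nrm2 (bigD1 S0) //= big1 ?addr0.
  by rewrite scaleE -cloneE /clone eqxx mulr1.
by move=> A /negbTE hA; rewrite scaleE -cloneE /clone hA mulr0 expr0n.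
Qed.

Lemma nrm2N u : nrm2 (- u) = nrm2 u.
Proof. by apply: eq_bigr => A _; rewrite oppE sqrrN. Qed.

Definition hsg A : R := if [exists i in A, nat_of_ord i == n.-1] then -1 else 1.

Lemma hsgE A : hsg A = \prod_(i : 'I_n) (if (i \in A) && (nat_of_ord i == n.-1) then -1 else 1).
Proof.
rewrite /hsg; case: existsP => [[i0 /andP [h0 e0]]|hn].
  rewrite (bigD1 i0) //= h0 e0 /= big1 ?mulr1 // => i hi.
  case: ifP => // /andP [_ ei]; exfalso; move/negP: hi; apply.
  by apply/eqP/val_inj; rewrite /= (eqP ei) (eqP e0).
rewrite big1 // => i _; case: ifP => // /andP [hi ei]; exfalso; apply: hn.
by exists i; rewrite hi ei.
Qed.

Lemma hsgD A B : hsg (symd A B) = hsg A * hsg B.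
Proof.
rewrite !hsgE -big_split; apply: eq_bigr => i _; rewrite in_symd.
by case: (i \in A); case: (i \in B); case: (_ == _); rewrite /= ?mulr1 ?mul1r ?mulrNN ?mulr1.
Qed.

Lemma hsg_sq A : hsg A * hsg A = 1.
Proof. by rewrite /hsg; case: ifP; rewrite ?mulrNN mulr1. Qed.

Lemma hsg0 : hsg S0 = 1.
Proof. by rewrite hsgE big1 // => i _; rewrite inE. Qed.

Definition chat u : clT := diagmap hsg u.
Lemma chatE (u : Cl R n) : clhat u = chat u.
Proof. by []. Qed.

Lemma chatM u v : chat (u * v) = chat u * chat v.
Proof. by apply: diag_auto => A B; apply: hsgD. Qed.
Lemma chatK u : chat (chat u) = u.
Proof. by apply: diag_invol => A; apply: hsg_sq. Qed.
Lemma chatD u v : chat (u + v) = chat u + chat v. Proof. exact: diagD. Qed.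
Lemma chatB u v : chat (u - v) = chat u - chat v. Proof. exact: diagB. Qed.
Lemma chatN u : chat (- u) = - chat u. Proof. exact: diagN. Qed.
Lemma chatZ k u : chat (k *: u) = k *: chat u. Proof. exact: diagZ. Qed.
Lemma chat_scal k : chat k%:A = k%:A. Proof. by apply: diag_scal; apply: hsg0. Qed.
Lemma chat1 : chat 1 = 1. Proof. by apply: diag1; apply: hsg0. Qed.

Lemma nrm2_hat u : nrm2 (chat u) = nrm2 u.
Proof.
apply: eq_bigr => A _; rewrite /chat /diagmap exprMn.
by rewrite expr2 hsg_sq mul1r.
Qed.

End Vec.

Section Vec2.
Variables (R : realType) (n : nat).
Implicit Types A B C : {set 'I_n}.
Local Notation clT := (clT R n).
Implicit Types u v w g : clT.
Implicit Types x y z : 'I_n -> R.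
Local Notation S0 := (finset.set0 : {set 'I_n}).
Local Notation vc x := (clvec x : clT).

Lemma addT u v C : (u + v) C = u C + v C. Proof. by []. Qed.
Lemma oppT u C : (- u) C = - u C. Proof. by []. Qed.
Lemma subT u v C : (u - v) C = u C - v C. Proof. by []. Qed.
Lemma scaleT (k : R) u C : (k *: u) C = k * u C. Proof. by []. Qed.
Lemma algT (k : R) C : (k%:A : clT) C = k * (1 : clT) C. Proof. by []. Qed.

Lemma sumT I (r : seq I) (P : pred I) (F : I -> clT) C :
  (\sum_(i <- r | P i) F i) C = \sum_(i <- r | P i) F i C.
Proof.
apply: (big_ind2 (fun (b : clT) (a : R) => b C = a)) => //.
by move=> b1 a1 b2 a2 <- <-.
Qed.

Definition bl A : clT := fun C => (C == A)%:R.

Lemma bl0 : bl S0 = 1.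
Proof. by []. Qed.

Lemma blM A B : bl A * bl B = sgn R A B *: bl (symd A B).
Proof.
apply/funext => C; rewrite clmulE' (bigD1 A) //= big1 ?addr0.
  rewrite /bl eqxx mulr1 [in RHS]/GRing.scale /=.
  have [->|ne] := eqVneq C (symd A B).
    by rewrite symdK !eqxx.
  have -> : (symd A C == B) = false.
    by apply/negbTE; apply: contra ne => /eqP <-; rewrite symdK.
  by rewrite mulr0 /GRing.scale /= mulr0.
by move=> D /negbTE hD; rewrite /bl hD mulr0 mul0r.
Qed.

Lemma vecE x : clvec x = \sum_i x i *: bl [set i].
Proof.
apply/funext => A; rewrite sumT; apply: eq_bigr => i _.
by rewrite /bl mulrC.
Qed.

Lemma vecD x y : clvec (fun i => x i + y i) = clvec x + clvec y.
Proof.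
apply/funext => A; rewrite /clvec addE -big_split; apply: eq_bigr => i _.
by rewrite mulrDr.
Qed.

Lemma vecZ (k : R) x : clvec (fun i => k * x i) = k *: clvec x.
Proof.
apply/funext => A; rewrite /clvec scaleE mulr_sumr; apply: eq_bigr => i _.
by rewrite mulrCA.
Qed.

Lemma vecN x : clvec (fun i => - x i) = - clvec x.
Proof.
apply/funext => A; rewrite /clvec oppE -sumrN; apply: eq_bigr => i _.
by rewrite mulrN.
Qed.

Lemma vecB x y : clvec (fun i => x i - y i) = clvec x - clvec y.
Proof. by rewrite vecD vecN. Qed.

Lemma diag_vec (h : {set 'I_n} -> R) (k : R) x :
  (forall i : 'I_n, h [set i] = k) -> diagmap h (clvec x) = k *: clvec x.
Proof.
move=> hk; apply/funext => A; rewrite /diagmap scaleE /clvec !mulr_sumr.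
apply: eq_bigr => i _; case: eqP => [->|_]; last by rewrite /= !mulr0n !mul0r !mulr0.
by rewrite hk.
Qed.

Lemma sgn11 (i j : 'I_n) : sgn R [set i] [set j] = if (j <= i)%N then -1 else 1.
Proof.
rewrite /sgn (bigD1 i) //= (bigD1 j) //= !inE !eqxx /= big1 ?mulr1.
  rewrite big1 ?mulr1 // => k /negbTE hk; rewrite big1 // => l _.
  by rewrite inE hk.
by move=> l /negbTE hl; rewrite inE hl.
Qed.

Lemma crev_vec x : crev (clvec x) = clvec x.
Proof.
rewrite /crev (@diag_vec _ 1) ?scale1r // => i.
by rewrite /rsg cards1.
Qed.

Lemma cconj_vec x : cconj (clvec x) = - clvec x.
Proof.
rewrite /cconj (@diag_vec _ (-1)) ?scaleN1r // => i.
by rewrite sgn11 leqnn.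
Qed.

Definition dotv x y : R := \sum_i x i * y i.

Lemma vec_sum_sing x (F : {set 'I_n} -> R) :
  \sum_A (vc x A) * F A = \sum_i x i * F [set i].
Proof.
rewrite /clvec; under eq_bigr => A _ do rewrite mulr_suml.
rewrite exchange_big /=; apply: eq_bigr => i _.
rewrite (bigD1 [set i]) //= eqxx big1 ?addr0 ?mul1r // => A /negbTE ->.
by rewrite mul0r mul0r.
Qed.

Lemma vec_sq x : vc x * vc x = (- dotv x x)%:A.
Proof.
apply/funext => C; rewrite clmulE'.
have -> : \sum_A sgn R A (symd A C) * vc x A * vc x (symd A C) =
    \sum_A vc x A * (sgn R A (symd A C) * vc x (symd A C)).
  by apply: eq_bigr => A _; ring.
rewrite vec_sum_sing.
pose T (i j : 'I_n) := ((C == symd [set i] [set j])%:R * (sgn R [set i] [set j] * x i * x j)).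
have -> : \sum_i x i * (sgn R [set i] (symd [set i] C) * vc x (symd [set i] C)) =
   \sum_i \sum_j T i j.
  apply: eq_bigr => i _; rewrite /clvec !mulr_sumr; apply: eq_bigr => j _.
  rewrite /T; have -> : (symd [set i] C == [set j]) = (C == symd [set i] [set j]).
    apply/eqP/eqP => [<-|->]; by rewrite symdK.
  case: eqP => [->|_]; last by rewrite /= !mulr0n !mul0r !mulr0.
  rewrite symdK; ring.
have -> : \sum_i \sum_j T i j = \sum_i T i i + \sum_i \sum_j (if j != i then T i j else 0).
  rewrite -big_split /=; apply: eq_bigr => i _.
  rewrite (bigD1 i) //= [in RHS](bigD1 i) //= eqxx add0r; congr (_ + _).
  by apply: eq_bigr => j hj; rewrite hj.
have -> : \sum_i \sum_j (if j != i then T i j else 0) = 0.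
  set S := (X in X = 0).
  have e : S = - S.
    rewrite {1}/S exchange_big /= /S -sumrN; apply: eq_bigr => j _; rewrite -sumrN.
    apply: eq_bigr => i _; rewrite eq_sym.
    case: eqP => [_|/eqP ne]; first by rewrite oppr0.
    rewrite /T symdC !sgn11.
    case: (ltngtP i j) => [h|h|/val_inj e]; last by rewrite e eqxx in ne.
      by rewrite /=; ring.
    by rewrite /=; ring.
  lra.
rewrite addr0 /T scaleE -cloneE /clone /dotv.
under eq_bigr => i _ do rewrite symdv sgn11 leqnn.
rewrite -mulr_sumr; case: (C == finset.set0) => /=; rewrite ?mul1r ?mul0r ?mulr1 ?mulr0 //.
rewrite -sumrN; apply: eq_bigr => i _; ring.
Qed.

Lemma vec_anti x y : vc x * vc y + vc y * vc x = (- (dotv x y + dotv y x))%:A.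
Proof.
have := vec_sq (fun i => x i + y i); rewrite vecD mulrDl !mulrDr vec_sq vec_sq.
have e : dotv (fun i => x i + y i) (fun i => x i + y i) = dotv x x + dotv y y + (dotv x y + dotv y x).
  rewrite /dotv -!big_split /=; apply: eq_bigr => i _; ring.
rewrite e => h; apply/funext => C; move/(congr1 (fun f : clT => f C)): h.
rewrite !addT !algT; lra.
Qed.

Lemma vec_conjM x : vc x * cconj (vc x) = (dotv x x)%:A.
Proof. by rewrite cconj_vec mulrN vec_sq scaleNr opprK. Qed.
Lemma vec_conjM' x : cconj (vc x) * vc x = (dotv x x)%:A.
Proof. by rewrite cconj_vec mulNr vec_sq scaleNr opprK. Qed.

Lemma nrm2_vec x : nrm2 (clvec x) = dotv x x.
Proof.
have := @nrm_mull R n (clvec x) 1 (dotv x x) (vec_conjM' x).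
by rewrite mulr1 -(scale1r (1 : clT)) -/(1%:A) nrm2_alg expr1n mulr1.
Qed.

Definition hatv x : 'I_n -> R := fun i => if nat_of_ord i == n.-1 then - x i else x i.

Lemma chat_vec x : chat (clvec x) = clvec (hatv x).
Proof.
apply/funext => A; rewrite /chat /diagmap /clvec mulr_sumr; apply: eq_bigr => i _.
case: eqP => [->|_]; last by rewrite /= !mul0r mulr0.
rewrite /hsg /hatv; have -> : [exists i0 in [set i], nat_of_ord i0 == n.-1] = (nat_of_ord i == n.-1).
  apply/existsP/idP => [[j /andP [hj ej]]|ei]; first by move: hj; rewrite inE => /eqP <-.
  by exists i; rewrite inE eqxx.
by case: ifP; rewrite ?mul1r ?mulN1r ?mulrN.
Qed.

Lemma chat_subvec x : sub_vector x -> chat (clvec x) = clvec x.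
Proof.
move=> hx; rewrite chat_vec; congr clvec; apply/funext => i; rewrite /hatv.
by case: eqP => // e; rewrite hx // oppr0.
Qed.

End Vec2.

Section Gam.
Variables (R : realType) (n : nat).
Implicit Types A B C : {set 'I_n}.
Local Notation clT := (clT R n).
Implicit Types u v w g : clT.
Implicit Types x y z : 'I_n -> R.
Local Notation S0 := (finset.set0 : {set 'I_n}).
Local Notation vc x := (clvec x : clT).

Definition prodv (s : seq ('I_n -> R)) : clT := foldr (fun x acc => vc x * acc) 1 s.

Lemma prodvE (s : seq ('I_n -> R)) :
  foldr (fun x acc => clmul (clvec x) acc) (@clone R n) s = prodv s.
Proof. by []. Qed.

Lemma prodv_rev s : exists lam : R,
  [/\ prodv s * crev (prodv s) = lam%:A, crev (prodv s) * prodv s = lam%:A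
    & (lam = 0 -> prodv s = 0)].
Proof.
elim: s => [|x s [l [h1 h2 h3]]] /=.
  exists 1; rewrite crev1 mulr1 scale1r; split => //.
  by move/eqP; rewrite oner_eq0.
exists (l * - dotv x x); split.
- rewrite crevM crev_vec mulrA -(mulrA (vc x)) h1 mulr_algr -scalerAl vec_sq.
  by rewrite scalerA.
- rewrite crevM crev_vec -mulrA (mulrA (vc x)) vec_sq mulr_algl -scalerAr h2.
  by rewrite scalerA mulrC.
- move/eqP; rewrite mulf_eq0 => /orP [/eqP /h3 ->|]; first by rewrite mulr0.
  rewrite oppr_eq0 -nrm2_vec nrm2_eq0 => /eqP ->; by rewrite mul0r.
Qed.

Lemma prodv_conj s : exists mu : R,
  prodv s * cconj (prodv s) = mu%:A /\ cconj (prodv s) * prodv s = mu%:A.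
Proof.
elim: s => [|x s [l [h1 h2]]] /=.
  by exists 1; rewrite cconj1 mulr1 scale1r.
exists (l * dotv x x); split.
- rewrite cconjM mulrA -(mulrA (vc x)) h1 mulr_algr -scalerAl vec_conjM.
  by rewrite scalerA.
- rewrite cconjM -mulrA (mulrA _ (vc x)) vec_conjM' mulr_algl -scalerAr h2.
  by rewrite scalerA mulrC.
Qed.

Lemma prodv_hat s : (forall i, (i < size s)%N -> sub_vector (nth (fun _ => 0) s i)) ->
  chat (prodv s) = prodv s.
Proof.
elim: s => [|x s IH] hs /=; first by rewrite chat1.
rewrite chatM chat_subvec; last by apply: (hs 0%N).
by rewrite IH // => i hi; apply: (hs i.+1).
Qed.

Definition gam g := (exists s : seq ('I_n -> R),
  (forall i : nat, (i < size s)%N -> sub_vector (nth (fun _ => 0) s i)) /\ g = prodv s) \/ g = 0.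

Lemma gam_props g : gam g ->
  [/\ exists lam : R, [/\ g * crev g = lam%:A, crev g * g = lam%:A & (lam = 0 -> g = 0)],
      exists mu : R, g * cconj g = mu%:A /\ cconj g * g = mu%:A
    & chat g = g].
Proof.
case => [[s [hs ->]]|->].
  by split; [exact: prodv_rev | exact: prodv_conj | exact: prodv_hat].
split.
- by exists 0; rewrite !mul0r mulr0 scale0r.
- by exists 0; rewrite mul0r mulr0 scale0r.
- by apply/funext => A; rewrite /chat /diagmap zeroE mulr0.
Qed.

Lemma nrm2Z (k : R) u : nrm2 (k *: u) = k ^+ 2 * nrm2 u.
Proof. by rewrite /nrm2 mulr_sumr; apply: eq_bigr => A _; rewrite scaleT exprMn. Qed.

Lemma nrm2_1 : nrm2 (1 : clT) = 1.
Proof. by have := @nrm2_alg R n 1; rewrite scale1r expr1n. Qed.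

Lemma mu_nrm g (mu : R) : cconj g * g = mu%:A -> mu = nrm2 g.
Proof. by move=> h; have := nrm_mull 1 h; rewrite mulr1 nrm2_1 mulr1. Qed.

Lemma nrm_linv g gi u (mu : R) : cconj g * g = mu%:A -> g * gi = 1 ->
  nrm2 (gi * u) = nrm2 u / mu.
Proof.
move=> h e; have := nrm_mull (gi * u) h; rewrite mulrA e mul1r => ->.
have hm : mu != 0.
  apply/eqP => m0; move: e; rewrite -(mulr1 g) => e.
  have := nrm_mull 1 h; rewrite m0 mul0r => /eqP; rewrite nrm2_eq0 => /eqP g0.
  by move: e; rewrite g0 !mul0r => /esym/eqP; rewrite oner_eq0.
by rewrite mulrC mulKf.
Qed.

Lemma nrm_rinv g gi u (mu : R) : g * cconj g = mu%:A -> gi * g = 1 ->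
  nrm2 (u * gi) = nrm2 u / mu.
Proof.
move=> h e; have := nrm_mulr (u * gi) h; rewrite -mulrA e mulr1 => ->.
have hm : mu != 0.
  apply/eqP => m0.
  have := nrm_mulr 1 h; rewrite m0 mul0r mul1r => /eqP; rewrite nrm2_eq0 => /eqP g0.
  by move: e; rewrite g0 !mulr0 => /esym/eqP; rewrite oner_eq0.
by rewrite mulrC mulKf.
Qed.

End Gam.

Section Aux.
Variables (R : realType) (n : nat).
Implicit Types A B C : {set 'I_n}.
Local Notation clT := (clT R n).
Implicit Types u v w g : clT.
Implicit Types x y z : 'I_n -> R.
Local Notation S0 := (finset.set0 : {set 'I_n}).
Local Notation vc x := (clvec x : clT).

Lemma diag_comm h1 h2 u : diagmap h1 (diagmap h2 u) = diagmap h2 (diagmap h1 u).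
Proof. by apply/funext => A; rewrite /diagmap mulrCA. Qed.

Lemma chat_crev u : chat (crev u) = crev (chat u). Proof. exact: diag_comm. Qed.
Lemma chat_cconj u : chat (cconj u) = cconj (chat u). Proof. exact: diag_comm. Qed.

Lemma hatv_add z (w : 'I_n -> R) : sub_vector w -> hatv (fun i => z i + w i) = (fun i => hatv z i + w i).
Proof.
move=> hw; apply/funext => i; rewrite /hatv; case: eqP => // e.
by rewrite hw // !addr0.
Qed.

Lemma dotv_hat z : dotv (hatv z) (hatv z) = dotv z z.
Proof. by apply: eq_bigr => i _; rewrite /hatv; case: ifP; rewrite ?mulrNN. Qed.

Lemma dotv_gt0 z (i0 : 'I_n) : z i0 != 0 -> 0 < dotv z z.
Proof.
move=> hz; rewrite /dotv (bigD1 i0) //=.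
apply: (@lt_le_trans _ _ (z i0 * z i0)).
  by rewrite -expr2 exprn_even_gt0 // hz.
by rewrite lerDl; apply: sumr_ge0 => i _; rewrite -expr2 sqr_ge0.
Qed.

Lemma vec_inv z : dotv z z != 0 ->
  vc z * ((dotv z z)^-1 *: cconj (vc z)) = 1 /\ ((dotv z z)^-1 *: cconj (vc z)) * vc z = 1.
Proof.
move=> hz; split.
  by rewrite -scalerAr vec_conjM scalerA mulVf // scale1r.
by rewrite -scalerAl vec_conjM' scalerA mulVf // scale1r.
Qed.

Lemma alg_eq0 (k : R) : (k%:A : clT) = 0 -> k = 0.
Proof.
move/(congr1 (fun f : clT => f S0)); rewrite algT zeroE.
by rewrite -cloneE /clone eqxx mulr1.
Qed.

Lemma M_conj (v w : 'I_n -> R) (e : R) :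
  let M := vc w * vc v - vc v * vc w - e%:A in
  exists mu : R, M * cconj M = mu%:A /\ cconj M * M = mu%:A.
Proof.
move=> M.
set p := vc w * vc v; set q := vc v * vc w.
set s := - (dotv w v + dotv v w).
set D := dotv v v * dotv w w.
have hs : p + q = s%:A by rewrite /p /q vec_anti.
have hpq : p * q = D%:A.
  rewrite /p /q mulrA -(mulrA (vc w)) vec_sq mulr_algr -scalerAl vec_sq.
  by rewrite scalerA mulrNN.
have hqp : q * p = D%:A.
  rewrite /p /q mulrA -(mulrA (vc v)) vec_sq mulr_algr -scalerAl vec_sq.
  by rewrite scalerA mulrNN mulrC.
have hpp : p * p = s *: p - D%:A.
  have -> : p * p = p * (s%:A - q) by rewrite -hs addrK.
  by rewrite mulrBr hpq mulr_algr.
have hqq : q * q = s *: q - D%:A.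
  have -> : q * q = q * (s%:A - p) by rewrite -hs (addrC p q) addrK.
  by rewrite mulrBr hqp mulr_algr.
have hcp : cconj p = q by rewrite /p /q cconjM !cconj_vec mulrNN.
have hcq : cconj q = p by rewrite /p /q cconjM !cconj_vec mulrNN.
have hcM : cconj M = q - p - e%:A by rewrite /M !cconjB hcp hcq cconj_scal.
exists (4%:R * D - s ^+ 2 + e ^+ 2).
have hq : forall C, q C = s * (1 : clT) C - p C.
  by move=> C; move/(congr1 (fun f : clT => f C)): hs; rewrite addT algT; lra.
split.
- rewrite hcM /M -/p -/q !mulrBl !mulrBr hpq hqp hpp hqq !mulr_algl !mulr_algr.
  apply/funext => C; rewrite !subT !scaleT !hq; ring.
- rewrite hcM /M -/p -/q !mulrBl !mulrBr hpq hqp hpp hqq !mulr_algl !mulr_algr.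
  apply/funext => C; rewrite !subT !scaleT !hq; ring.
Qed.

End Aux.

Section Good.
Variables (R : realType) (n : nat).
Local Notation clT := (clT R n).
Implicit Types u v w g : clT.
Implicit Types x y z : 'I_n -> R.
Local Notation vc x := (clvec x : clT).

Definition good (psi : ('I_n -> R) -> clT) (i0 : 'I_n) : Prop :=
 exists (E : ('I_n -> R) -> clT) (ka : R) (rho : ('I_n -> R) -> R),
 [/\ 0 < ka,
   forall z, z i0 != 0 -> psi z = E z,
   forall z, chat (E z) = E (hatv z),
   forall z1 z2, z1 i0 != 0 -> z2 i0 != 0 ->
     nrm2 (E z1 - E z2) = ka * rho z1 * rho z2 * nrm2 (vc z1 - vc z2) &
   forall z, z i0 != 0 -> 0 < rho z /\ rho (hatv z) = rho z].

Lemma sqrt_ratio (K N1 N2 : R) : 0 < K ->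
  Num.sqrt (K * N1) / Num.sqrt (K * N2) = Num.sqrt N1 / Num.sqrt N2.
Proof.
move=> hK; rewrite !sqrtrM ?ltW // invfM.
have hs : Num.sqrt K != 0 by rewrite sqrtr_eq0 -ltNge.
transitivity (Num.sqrt N1 / Num.sqrt N2 * (Num.sqrt K / Num.sqrt K)); first ring.
by rewrite divff // mulr1.
Qed.

Lemma hratioE (u v : Cl R n) : hratio u v =
  Num.sqrt (nrm2 ((u : clT) - v)) / Num.sqrt (nrm2 ((u : clT) - chat v)).
Proof. by []. Qed.

Lemma good_ratio psi (i0 : 'I_n) x y : good psi i0 -> nat_of_ord i0 = n.-1 ->
  x i0 != 0 -> y i0 != 0 -> hratio (psi x) (psi y) = hratio (clvec x) (clvec y).
Proof.
move=> [E [ka [rho [hka hpsi hhat hnrm hrho]]]] hi0 hx hy.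
have hy' : hatv y i0 != 0 by rewrite /hatv hi0 eqxx oppr_eq0.
rewrite !hratioE (hpsi x hx) (hpsi y hy) chat_vec hhat !hnrm //.
have [r1 _] := hrho x hx; have [r2 e2] := hrho y hy.
rewrite e2 sqrt_ratio //; do 2? apply: mulr_gt0 => //.
Qed.

End Good.

Section CaseA.
Variables (R : realType) (n : nat).
Local Notation clT := (clT R n).
Implicit Types u v w g : clT.
Implicit Types x y z : 'I_n -> R.
Local Notation vc x := (clvec x : clT).

Lemma crev0 : crev (0 : clT) = 0.
Proof. by apply/funext => A; rewrite /crev /diagmap zeroE mulr0. Qed.

Lemma nrm2_gt0 u : u != 0 -> 0 < nrm2 u.
Proof. by move=> hu; rewrite lt_def nrm2_eq0 hu nrm2_ge0. Qed.

Lemma caseA (a b c d : clT) (eps : R) (i0 : 'I_n) : gam a -> gam b -> gam d -> c = 0 ->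
  crev a * d = eps%:A -> eps != 0 ->
  good (fun z => (a * vc z + b) * clinv (c * vc z + d)) i0.
Proof.
move=> ga gb gd c0 had he.
have [_ [ma [_ hma]] hha] := gam_props ga.
have [_ _ hhb] := gam_props gb.
have [[ld [hd1 hd2 hd3]] [md [hmd1 hmd2]] hhd] := gam_props gd.
have dn0 : d != 0.
  apply/eqP => d0; move: had; rewrite d0 mulr0 => /esym/alg_eq0 e0.
  by rewrite e0 eqxx in he.
have an0 : a != 0.
  apply/eqP => a0; move: had; rewrite a0 crev0 mul0r => /esym/alg_eq0 e0.
  by rewrite e0 eqxx in he.
have ldn0 : ld != 0 by apply/eqP => /hd3 d0; rewrite d0 eqxx in dn0.
pose dinv := ld^-1 *: crev d.
have hdi1 : d * dinv = 1 by rewrite /dinv -scalerAr hd1 scalerA mulVf // scale1r.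
have hdi2 : dinv * d = 1 by rewrite /dinv -scalerAl hd2 scalerA mulVf // scale1r.
have ema := mu_nrm hma; have emd := mu_nrm hmd2.
exists (fun z => (a * vc z + b) * dinv), (ma / md), (fun _ => 1); split.
- by rewrite ema emd divr_gt0 // nrm2_gt0.
- by move=> z _; rewrite c0 mul0r add0r (clinvE hdi1 hdi2).
- move=> z; rewrite chatM chatD chatM hha hhb chat_vec /dinv chatZ chat_crev hhd //.
- move=> z1 z2 _ _.
  have -> : (a * vc z1 + b) * dinv - (a * vc z2 + b) * dinv = a * (vc z1 - vc z2) * dinv.
    rewrite -mulrBl mulrBr; congr (_ * _).
    by apply/funext => C; rewrite !subT !addT; ring.
  by rewrite (nrm_rinv _ hmd1 hdi2) (nrm_mull _ hma); ring.
- by move=> z _; split.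
Qed.

End CaseA.

Section CaseB.
Variables (R : realType) (n : nat).
Local Notation clT := (clT R n).
Implicit Types u v w g : clT.
Implicit Types x y z : 'I_n -> R.
Local Notation vc x := (clvec x : clT).
Local Notation S0 := (finset.set0 : {set 'I_n}).

Lemma caseB (a b c d : clT) (eps : R) (v1 w1 : 'I_n -> R) (i0 : 'I_n) :
  gam c -> c != 0 -> sub_vector v1 -> sub_vector w1 -> nat_of_ord i0 = n.-1 ->
  crev a * c = vc v1 -> crev c * d = vc w1 -> crev a * d - crev b * c = eps%:A -> eps != 0 ->
  good (fun z => (a * vc z + b) * clinv (c * vc z + d)) i0.
Proof.
move=> gc cn0 sv1 sw1 hi0 h1 h2 h5 he.
have [[lc [hc1 hc2 hc3]] [mc [hmc1 hmc2]] hhc] := gam_props gc.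
have lcn0 : lc != 0 by apply/eqP => /hc3 c0; rewrite c0 eqxx in cn0.
pose k := lc^-1.
have kn0 : k != 0 by rewrite invr_eq0.
pose cinv := k *: crev c.
have hci1 : c * cinv = 1 by rewrite /cinv -scalerAr hc1 scalerA mulVf // scale1r.
have hci2 : cinv * c = 1 by rewrite /cinv -scalerAl hc2 scalerA mulVf // scale1r.
have e1 : crev c * a = vc v1 by rewrite -[in LHS](crevK a) -crevM h1 crev_vec.
have ha : a = k *: (c * vc v1) by rewrite -e1 mulrA hc1 mulr_algl scalerA mulVf // scale1r.
have hd : d = k *: (c * vc w1) by rewrite -h2 mulrA hc1 mulr_algl scalerA mulVf // scale1r.
have e5 : crev b * c = crev a * d - eps%:A.
  apply/funext => C; move/(congr1 (fun f : clT => f C)): h5; rewrite !subT !algT; lra.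
have e6 : crev b = k *: ((crev a * d - eps%:A) * crev c).
  by rewrite -e5 -mulrA hc1 mulr_algr scalerA mulVf // scale1r.
have e7 : b = k *: (c * (crev d * a - eps%:A)).
  by rewrite -(crevK b) e6 crevZ crevM crevK crevB crevM crevK crev_scal.
have e8 : crev d * a = k *: (vc w1 * vc v1).
  rewrite {1}hd ha crevZ crevM crev_vec -scalerAl -scalerAr scalerA.
  rewrite -mulrA (mulrA (crev c)) hc2 mulr_algl -scalerAr scalerA.
  by congr (_ *: _); rewrite -mulrA mulVf // mulr1.
have hb : b = k *: (c * (k *: (vc w1 * vc v1) - eps%:A)) by rewrite e7 e8.
pose w' := fun i => k * w1 i.
have sw' : sub_vector w' by move=> i hi; rewrite /w' sw1 // mulr0.
have hw' : vc w' = k *: vc w1 by rewrite /w' vecZ.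
pose Zf z := fun i => z i + w' i.
pose dZ z := dotv (Zf z) (Zf z).
pose Zi z := (dZ z)^-1 *: cconj (vc (Zf z)).
have hZf0 : forall z, Zf z i0 = z i0 by move=> z; rewrite /Zf sw' // addr0.
have dZ_gt0 : forall z, z i0 != 0 -> 0 < dZ z.
  by move=> z hz; apply: (dotv_gt0 (i0 := i0)); rewrite hZf0.
have hZ : forall z, z i0 != 0 -> vc (Zf z) * Zi z = 1 /\ Zi z * vc (Zf z) = 1.
  by move=> z hz; apply: vec_inv; rewrite gt_eqF // dZ_gt0.
pose M := vc w' * vc v1 - vc v1 * vc w' - eps%:A.
have [mM [hmM1 hmM2]] : exists mu : R, M * cconj M = mu%:A /\ cconj M * M = mu%:A.
  exact: M_conj.
have Mn0 : M != 0.
  apply/eqP => /(congr1 (fun f : clT => f S0)); rewrite /M !subT algT zeroE.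
  rewrite (scal0 (vc w')) -cloneE /clone eqxx mulr1 subrr sub0r => /eqP.
  by rewrite oppr_eq0 (negbTE he).
have emM := mu_nrm hmM2; have emc := mu_nrm hmc2.
have mcn0 : mc != 0 by rewrite emc gt_eqF // nrm2_gt0.
pose E z := k *: (c * (vc v1 + M * Zi z) * cinv).
exists E, (k ^+ 2 * mM), (fun z => (dZ z)^-1); split.
- by rewrite emM mulr_gt0 // ?nrm2_gt0 // exprn_even_gt0.
- move=> z hz; have [hz1 hz2] := hZ z hz.
  have hden : c * vc z + d = c * vc (Zf z) by rewrite /Zf vecD hw' hd mulrDr -scalerAr.
  rewrite hden (@clinvE _ _ (c * vc (Zf z)) (Zi z * cinv)); first last.
  + by rewrite mulrA -(mulrA (Zi z)) hci2 mulr1 hz2.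
  + by rewrite mulrA -(mulrA c) hz1 mulr1 hci1.
  have hnum : a * vc z + b = k *: (c * (vc v1 * vc (Zf z) + M)).
    rewrite ha hb -scalerAl -scalerDr -mulrA -mulrDr; congr (_ *: (c * _)).
    rewrite /M /Zf vecD hw' -!scalerAl -!scalerAr mulrDr -scalerAr.
    by apply/funext => C; rewrite !addT ?oppT ?scaleT; ring.
  rewrite hnum -scalerAl /E; congr (_ *: _).
  rewrite !mulrA; congr (_ * cinv); rewrite -!mulrA; congr (c * _).
  by rewrite mulrDl -mulrA hz1 mulr1.
- move=> z.
  have hM : chat M = M by rewrite /M !chatB !chatM !chat_subvec // chat_scal.
  have hZi : chat (Zi z) = Zi (hatv z).
    rewrite /Zi chatZ chat_cconj chat_vec /Zf hatv_add // /dZ.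
    by rewrite /Zf -(hatv_add z sw') dotv_hat.
  have hcinv : chat cinv = cinv by rewrite /cinv chatZ chat_crev hhc.
  by rewrite /E chatZ !chatM chatD chatM hhc chat_subvec // hM hZi hcinv.
- move=> z1 z2 hz1 hz2.
  have [h11 h12] := hZ z1 hz1; have [h21 h22] := hZ z2 hz2.
  have hW : Zi z1 * (vc (Zf z2) - vc (Zf z1)) * Zi z2 = Zi z1 - Zi z2.
    by rewrite mulrBr mulrBl -mulrA h21 mulr1 h12 mul1r.
  have hD : vc (Zf z2) - vc (Zf z1) = vc z2 - vc z1.
    by rewrite /Zf !vecD; apply/funext => C; rewrite !subT !addT; ring.
  have -> : E z1 - E z2 = k *: (c * (M * (Zi z1 * (vc z2 - vc z1) * Zi z2)) * cinv).
    rewrite -hD hW /E -scalerBr -mulrBl -mulrBr; congr (_ *: (_ * cinv)); rewrite [in RHS]mulrBr; congr (c * _).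
    by apply/funext => C; rewrite ?subT ?addT ?oppT; ring.
  rewrite nrm2Z (nrm_rinv _ hmc1 hci2) (nrm_mull _ hmc2) (nrm_mull _ hmM2).
  rewrite (nrm_rinv _ (vec_conjM _) h22) (nrm_linv _ (vec_conjM' _) h11).
  rewrite -opprB nrm2N -/(dZ z1) -/(dZ z2).
  field.
  by rewrite mcn0 !gt_eqF ?dZ_gt0.
- move=> z hz; split; first by rewrite invr_gt0 dZ_gt0.
  by rewrite /dZ /Zf -(hatv_add z sw') dotv_hat.
Qed.

End CaseB.

Unset Implicit Arguments. Set Strict Implicit.

Theorem proposition2 (R : realType) (n : nat) (f : R -> Cl R n)
  (a b c d : Cl R n) :
  (2 < n)%N ->
  (forall r : R, 0 <= r -> in_Cl_sub (f r)) ->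
  (forall A : {set 'I_n},
     (@lebesgue_measure R).-integrable `[0, +oo[%classic (fun r => (f r A)%:E)) ->
  vahlen a b c d ->
  (forall x y : 'I_n -> R, in_uhs x -> in_uhs y ->
     clnorm (clsub (clvec x) (clhat (clvec y))) != 0 /\
     (forall A : {set 'I_n},
        (@lebesgue_measure R).-integrable `[0, hratio (clvec x) (clvec y)]%classic
          (fun r => (f r A)%:E))) /\
  (forall x y : 'I_n -> R, in_uhs x -> in_uhs y ->
     Fint f (mobius a b c d x) (mobius a b c d y) = Fint f (clvec x) (clvec y)).
Proof.
move=> hn _ hint hv.
have hn1 : (n.-1 < n)%N by move: hn; case: (n).
pose i0 := Ordinal hn1.
have hi0 : nat_of_ord i0 = n.-1 by [].
have uhs0 : forall x : 'I_n -> R, in_uhs x -> 0 < x i0 by move=> x hx; exact: (hx i0 hi0).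
split.
  move=> x y hx hy; split.
    rewrite clnormE sqrtr_eq0 -ltNge.
    have -> : (clsub (clvec x) (clhat (clvec y)) : clT R n) = clvec (fun i => x i - hatv y i).
      by rewrite vecB -chat_vec.
    rewrite nrm2_vec (dotv_gt0 (i0 := i0)) //.
    rewrite /hatv hi0 eqxx opprK gt_eqF //.
    by rewrite addr_gt0 // uhs0.
  move=> A; apply: (integrableS _ _ _ (hint A)) => //.
  move=> r /=; rewrite !in_itv /= => /andP [h0 _]; by rewrite h0.
move=> x y hx hy.
have hx0 : x i0 != 0 by rewrite gt_eqF // uhs0.
have hy0 : y i0 != 0 by rewrite gt_eqF // uhs0.
case: hv => ha hb hc hd [[v1 [sv1 h1]] [w1 [sw1 h2]] _ _ h5].
have toGam : forall g : Cl R n, (is_vprod g \/ g = @clzero R n) -> gam (g : clT R n).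
  move=> g [[s [hs ->]]|->]; last by right.
  by left; exists s; split.
have [eps [he h5']] : exists eps : R, eps != 0 /\
    crev (a : clT R n) * d - crev (b : clT R n) * c = eps%:A.
  case: h5 => h5.
    by exists 1; split; [exact: oner_neq0 | rewrite scale1r; exact: h5].
  exists (-1); split; first by rewrite oppr_eq0 oner_neq0.
  by rewrite scaleN1r; exact: h5.
have hgood : good (fun z => ((a : clT R n) * clvec z + b) * clinv ((c : clT R n) * clvec z + d)) i0.
  have [c0|cn0] := eqVneq (c : clT R n) 0.
    apply: (caseA (eps := eps)) => //; try exact: toGam.
    by move: h5'; rewrite c0 mulr0 subr0.
  apply: (caseB (eps := eps) (v1 := v1) (w1 := w1)) => //.
have e := good_ratio hgood hi0 hx0 hy0.
by rewrite /Fint /mobius; apply/funext => A; rewrite e.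
Qed.
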